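(* Let $A$ be a $\star$-hypercentral T-brace whose additive group $(A,+)$ is not periodic, and let $T$ be the torsion subgroup of $(A,+)$. Then $T$ is an ideal of $A$ and the quotient brace $A/T$ is abelian.
   Context: A (left) brace is a set $A$ with two operations $+$ and $\cdot$ such that $(A,+)$ is an abelian group, $(A,\cdot)$ is a group, and $a(b+c)=ab+ac-a$ for all $a,b,c\in A$. Put $a\star b=ab-a-b$. A subbrace is a subset which is a subgroup of both $(A,+)$ and $(A,\cdot)$; a subbrace $L$ is an ideal if $a\star z, z\star a\in L$ for all $a\in A$, $z\in L$, and then the quotient brace $A/L$ is defined. A brace is abelian if $a\star b=0$ for all $a,b$. $A$ is a T-brace if whenever $I$ is an ideal of $J$ and $J$ is an ideal of $A$, then $I$ is an ideal of $A$. The $\star$-center is $\zeta(\star,A)=\{a\in A: a\star x=x\star a=0 \ \forall x\in A\}$. The upper $\star$-central series: $\zeta_0(\star,A)=0$, $\zeta_{\alpha+1}(\star,A)/\zeta_\alpha(\star,A)=\zeta(\star,A/\zeta_\alpha(\star,A))$, unions at limit ordinals; its last term is $\zeta_\infty(\star,A)$. $A$ is $\star$-hypercentral if $A=\zeta_\infty(\star,A)$. *)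

(* Defs.v *)
From HB Require Import structures.
From mathcomp Require Import all_boot all_algebra.
Set Implicit Arguments. Unset Strict Implicit. Unset Printing Implicit Defensive.
Import GRing.Theory.
Local Open Scope ring_scope.

Record brace := Brace {
  bT :> zmodType;
  bmul : bT -> bT -> bT;
  bone : bT;
  binv : bT -> bT;
  bmulA : forall a b c, bmul a (bmul b c) = bmul (bmul a b) c;
  bmul1l : forall a, bmul bone a = a;
  bmul1r : forall a, bmul a bone = a;
  bmulVl : forall a, bmul (binv a) a = bone;
  bmulVr : forall a, bmul a (binv a) = bone;
  bdistr : forall a b c, bmul a (b + c) = bmul a b + bmul a c - a
}.

Section BraceDefs.
Variable A : brace.

Definition star (a b : A) : A := bmul a b - a - b.

Definition subbrace (L : A -> Prop) : Prop :=
  [/\ L 0, (forall x y, L x -> L y -> L (x - y)),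
      L (bone A), (forall x y, L x -> L y -> L (bmul x y))
    & (forall x, L x -> L (binv x))].

Definition ideal_of (J I : A -> Prop) : Prop :=
  [/\ subbrace I, (forall x, I x -> J x)
    & forall a z, J a -> I z -> I (star a z) /\ I (star z a)].

Definition ideal (L : A -> Prop) : Prop := ideal_of (fun _ => True) L.

Definition T_brace : Prop :=
  forall I J : A -> Prop, subbrace J -> ideal_of J I -> ideal J -> ideal I.

(* The next term of the upper star-central series: if S = zeta_alpha (an
   ideal), then zeta_{alpha+1}/S = zeta(star, A/S), i.e.
   zeta_{alpha+1} = { a | a*x, x*a in S for all x }. *)
Definition zeta_next (S : A -> Prop) : A -> Prop :=
  fun a => forall x, S (star a x) /\ S (star x a).

(* The terms of the (transfinite) upper star-central series: generated from
   zeta_0 = 0 by successor steps and unions of (nonempty) families of terms. *)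
Inductive zeta_term : (A -> Prop) -> Prop :=
  | zeta_zero : zeta_term (fun x => x = 0)
  | zeta_succ S : zeta_term S -> zeta_term (zeta_next S)
  | zeta_union (P : (A -> Prop) -> Prop) :
      (exists S, P S) -> (forall S, P S -> zeta_term S) ->
      zeta_term (fun x => exists S, P S /\ S x).

Definition zeta_infty : A -> Prop := fun x => exists S, zeta_term S /\ S x.

Definition star_hypercentral : Prop := forall a : A, zeta_infty a.

Definition torsion : A -> Prop := fun x => exists n : nat, (0 < n)%N /\ x *+ n = 0.

Definition add_periodic : Prop := forall x : A, torsion x.

(* A/L abelian: (a+L) star (b+L) = a star b + L = 0 in A/L *)
Definition quotient_abelian (L : A -> Prop) : Prop := forall a b : A, L (star a b).

End BraceDefs.

(* Main.v *)
Require Import Defs.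
From HB Require Import structures.
From mathcomp Require Import all_boot all_algebra.
From mathcomp Require Import ring zify.
Set Implicit Arguments. Unset Strict Implicit. Unset Printing Implicit Defensive.
Import GRing.Theory.
Local Open Scope ring_scope.

Lemma bmul0r (A : brace) (a : A) : bmul a 0 = a.
Proof.
have := bdistr a 0 0; rewrite addr0 -addrA -{1}[bmul a 0]addr0 => /addrI /eqP.
by rewrite eq_sym subr_eq0 => /eqP.
Qed.

Lemma bone0 (A : brace) : bone A = 0.
Proof. by rewrite -(bmul1l (0 : A)) bmul0r. Qed.

Lemma bmul0l (A : brace) (a : A) : bmul 0 a = a.
Proof. by rewrite -(bone0 A) bmul1l. Qed.

Definition lam (A : brace) (a x : A) := bmul a x - a.

Lemma lamD (A : brace) (a x y : A) : lam a (x + y) = lam a x + lam a y.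
Proof. by rewrite /lam bdistr addrA (addrAC (bmul a x)). Qed.

Lemma lam_morph (A : brace) (a : A) : zmod_morphism (lam a).
Proof.
move=> x y. have h0 : lam a 0 = 0 by rewrite /lam bmul0r subrr.
have hN : lam a (- y) = - lam a y.
  by apply/eqP; rewrite -subr_eq0 opprK -lamD addNr h0.
by rewrite lamD hN.
Qed.

HB.instance Definition _ (A : brace) (a : A) :=
  GRing.isZmodMorphism.Build A A (lam a) (lam_morph a).

Lemma starE (A : brace) (a x : A) : star a x = lam a x - x.
Proof. by rewrite /star /lam addrAC. Qed.

Lemma star_morph (A : brace) (a : A) : zmod_morphism (star a).
Proof.
move=> x y; rewrite !starE raddfB !opprB addrACA [RHS]addrACA.
by congr (_ + _); rewrite addrC.
Qed.
HB.instance Definition _ (A : brace) (a : A) :=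
  GRing.isZmodMorphism.Build A A (star a) (star_morph a).

Lemma star0l (A : brace) (x : A) : star 0 x = 0.
Proof. by rewrite /star bmul0l subr0 subrr. Qed.

Lemma lam_mul (A : brace) (u v x : A) : lam (bmul u v) x = lam u (lam v x).
Proof.
rewrite /lam -bmulA. rewrite -{1}[bmul v x](subrK v) -/(lam v x).
by rewrite addrC bdistr addrC addrAC addrK.
Qed.

Lemma lam0 (A : brace) (x : A) : lam 0 x = x.
Proof. by rewrite /lam bmul0l subr0. Qed.

Lemma bmulE (A : brace) (u v : A) : bmul u v = u + v + star u v.
Proof. by rewrite /star -[bmul u v - u - v]addrA -opprD [RHS]addrC subrK. Qed.

Lemma star_mul (A : brace) (u v x : A) :
  star (bmul u v) x = star u x + star v x + star u (star v x).
Proof.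
rewrite [LHS]starE lam_mul [star v x]starE [star u (lam v x - x)]raddfB /=.
set p := star u x; set q := lam v x - x; set r := star u (lam v x).
rewrite (addrC p q) -(addrA q p) (addrCA p r) subrr addr0 /r /q.
by rewrite [star u (lam v x)]starE addrC addrA subrK.
Qed.

Lemma tor0 (A : brace) : torsion (0 : A).
Proof. by exists 1%N. Qed.

Lemma torN (A : brace) (x : A) : torsion x -> torsion (- x).
Proof. by case=> n [n0 hn]; exists n; rewrite mulNrn hn oppr0. Qed.

Lemma torD (A : brace) (x y : A) : torsion x -> torsion y -> torsion (x + y).
Proof.
case=> n [n0 hn] [m [m0 hm]]; exists (n * m)%N; split; first by rewrite muln_gt0 n0.
by rewrite mulrnDl mulrnA hn mul0rn mulnC mulrnA hm mul0rn addr0.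
Qed.

Lemma torB (A : brace) (x y : A) : torsion x -> torsion y -> torsion (x - y).
Proof. by move=> hx hy; apply: torD => //; apply: torN. Qed.

Lemma tor_mulrn (A : brace) (x : A) k : torsion x -> torsion (x *+ k).
Proof. by case=> n [n0 hn]; exists n; rewrite -mulrnA mulnC mulrnA hn mul0rn. Qed.

Lemma tor_mulrz (A : brace) (x : A) k : torsion x -> torsion (x *~ k).
Proof.
move=> hx; case: k => k; first by rewrite -pmulrn; apply: tor_mulrn.
by rewrite NegzE mulrNz -pmulrn; apply/torN/tor_mulrn.
Qed.

Lemma tor_pure (A : brace) (x : A) k : (0 < k)%N -> torsion (x *+ k) -> torsion x.
Proof.
move=> k0 [n [n0 hn]]; exists (k * n)%N; split; first by rewrite muln_gt0 k0.
by rewrite mulrnA.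
Qed.

Lemma tor_purez (A : brace) (x : A) (k : int) : k != 0 -> torsion (x *~ k) -> torsion x.
Proof.
case: k => k hk.
  rewrite -pmulrn; apply: tor_pure; by rewrite lt0n; case: k hk.
by rewrite NegzE mulrNz -pmulrn => /torN; rewrite opprK; apply: tor_pure.
Qed.

Lemma tor_sum (A : brace) n (F : 'I_n -> A) :
  (forall i, torsion (F i)) -> torsion (\sum_(i < n) F i).
Proof.
move=> h; elim/big_ind: _ => //; [exact: tor0 | exact: torD].
Qed.

Lemma tor_lam (A : brace) (a x : A) : torsion x -> torsion (lam a x).
Proof. by case=> n [n0 hn]; exists n; rewrite -raddfMn hn raddf0. Qed.

Lemma tor_star_r (A : brace) (a x : A) : torsion x -> torsion (star a x).
Proof. by case=> n [n0 hn]; exists n; rewrite -raddfMn hn raddf0. Qed.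

Lemma LN (A : brace) : star_hypercentral A ->
  forall t x : A, exists K, iter K (star t) x = 0.
Proof.
move=> hc t x; have [S [hS Sx]] := hc x.
elim: hS x Sx => [x -> | S0 _ IH x Sx | P _ _ IH x [S1 [PS Sx]]].
- by exists 0%N.
- have [K hK] := IH _ (Sx t).2; exists K.+1; by rewrite iterSr.
- exact: IH PS x Sx.
Qed.

Lemma iter_star0 (A : brace) (t : A) j : iter j (star t) 0 = 0.
Proof. by elim: j => //= j ->; rewrite raddf0. Qed.

Lemma iter_star_mulrn (A : brace) (t u : A) j k :
  iter j (star t) (u *+ k) = iter j (star t) u *+ k.
Proof. by elim: j => //= j ->; rewrite raddfMn. Qed.

Lemma rec_sum (A : brace) (t : A) (s : nat -> A) (v : A) N :
  s 0%N = 0 -> (forall m, s m.+1 = v + s m + star t (s m)) ->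
  iter N (star t) v = 0 ->
  forall m, s m = \sum_(j < N) (iter j (star t) v) *+ 'C(m, j.+1).
Proof.
move=> s0 sS vN; elim=> [|m IH].
  by rewrite s0 big1 // => j _; rewrite bin0n mulr0n.
have key : \sum_(j < N) iter j (star t) v *+ 'C(m, j) =
   v + \sum_(j < N) iter j.+1 (star t) v *+ 'C(m, j.+1).
  case: N vN {IH} => [|N] vN.
    by rewrite !big_ord0 addr0 -vN.
  rewrite big_ord_recl /= bin0 mulr1n; congr (_ + _).
  rewrite big_ord_recr /= -iterS vN mul0rn addr0; apply: eq_bigr => i _.
  by rewrite add0n /bump leq0n add1n.
rewrite sS IH raddf_sum /=.
have -> : \sum_(i < N) star t (iter i (star t) v *+ 'C(m, i.+1)) =
          \sum_(j < N) iter j.+1 (star t) v *+ 'C(m, j.+1).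
  by apply: eq_bigr => j _; rewrite raddfMn.
have -> : \sum_(j < N) iter j (star t) v *+ 'C(m.+1, j.+1) =
   \sum_(j < N) iter j (star t) v *+ 'C(m, j.+1) + \sum_(j < N) iter j (star t) v *+ 'C(m, j).
  by rewrite -big_split /=; apply: eq_bigr => j _; rewrite binS mulrnDr.
by rewrite key addrCA addrA.
Qed.

Lemma tor_star_l (A : brace) : star_hypercentral A ->
  forall t x : A, torsion t -> torsion (star t x).
Proof.
move=> hc t x [n [n0 tn]].
have [K hK] := LN hc t t.
pose p m := iter m (bmul t) (0 : A).
have p0 : p 0%N = 0 by [].
have pS : forall m, p m.+1 = t + p m + star t (p m).
  by move=> m; rewrite /p iterS bmulE.
pose M := (n * K`!)%N.
have M0 : (0 < M)%N by rewrite muln_gt0 n0 fact_gt0.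
have pM : p M = 0.
  rewrite (rec_sum p0 pS hK) big1 // => j _.
  have jK : (0 < j.+1 <= K)%N by rewrite ltn_ord.
  have [c hc'] : exists c, 'C(M, j.+1) = (n * c)%N.
    have hd := dvdn_fact jK.
    exists ((K`! %/ j.+1) * 'C(M.-1, j))%N.
    apply/eqP; rewrite -(eqn_pmul2l (ltn0Sn j)) -mul_bin_diag /M.
    rewrite -{1}(divnK hd); apply/eqP; ring.
  by rewrite hc' mulrnA -iter_star_mulrn tn iter_star0 mul0rn.
have main : forall N y, iter N (star t) y = 0 -> torsion (star t y).
  elim=> [|N IH] y hy.
    by rewrite /= in hy; rewrite hy raddf0; apply: tor0.
  pose q m := star (p m) y.
  have q0 : q 0%N = 0 by rewrite /q p0 star0l.
  have qS : forall m, q m.+1 = star t y + q m + star t (q m).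
    by move=> m; rewrite /q /p iterS star_mul.
  have hv : iter N.+1 (star t) (star t y) = 0.
    by rewrite -iterSr iterS hy raddf0.
  have := rec_sum q0 qS hv M.
  rewrite /q pM star0l big_ord_recl /= bin1 => /eqP; rewrite eq_sym addr_eq0 => /eqP h.
  apply: (tor_pure M0); rewrite h; apply/torN/tor_sum => i.
  apply: tor_mulrn.
  apply: IH; rewrite add0n -iterD -iterSr -addSn addnC iterD hy iter_star0 //.
have [N hN] := LN hc t x.
exact: main hN.
Qed.

Lemma ideal_ofP (A : brace) (J I : A -> Prop) :
  subbrace J -> I 0 -> (forall x y, I x -> I y -> I (x - y)) ->
  (forall x, I x -> J x) ->
  (forall j z, J j -> I z -> I (star j z) /\ I (star z j)) -> ideal_of J I.
Proof.
move=> [J0 JB J1 JM JV] I0 IB IJ Is.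
have IN : forall x, I x -> I (- x) by move=> x Ix; rewrite -sub0r; apply: IB.
have ID : forall x y, I x -> I y -> I (x + y)
  by move=> x y Ix Iy; rewrite -[y]opprK; apply/IB/IN.
split=> //; split=> //.
- by rewrite bone0.
- move=> x y Ix Iy; rewrite bmulE; exact: ID (ID _ _ Ix Iy) ((Is _ _ (IJ _ Ix) Iy).1).
- move=> x Ix.
  have h : binv x = - (x + star (binv x) x).
    by apply/eqP; rewrite -addr_eq0 addrA -bmulE bmulVl bone0.
  rewrite h; apply/IN/ID => //; apply: (Is _ _ (JV _ (IJ _ Ix)) Ix).1.
Qed.

Definition ZT (A : brace) := zeta_next (torsion (A:=A)).


Lemma ZT_tor (A : brace) (hc : star_hypercentral A) (t : A) : torsion t -> ZT t.
Proof. by move=> ht x; split; [apply: tor_star_l | apply: tor_star_r]. Qed.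

Lemma L1 (A : brace) (hc : star_hypercentral A) (u v x : A) :
  torsion v -> torsion (star (u + v) x - star u x).
Proof.
move=> hv; set v' := lam (binv u) v.
have e : u + v = bmul u v'.
  by rewrite /v' -[bmul u _](subrK u) -/(lam u _) -lam_mul bmulVr bone0 lam0 addrC.
have hv' : torsion v' by apply: tor_lam.
rewrite e star_mul -[star u x + _ + _]addrA (addrC (star u x + _)) addKr; apply: torD.
  exact: tor_star_l.
by apply: tor_star_r; apply: tor_star_l.
Qed.

Lemma L2 (A : brace) (hc : star_hypercentral A) (u v x : A) :
  ZT v -> torsion (star (u + v) x - star u x).
Proof.
move=> hv.
have e : u + v = bmul u v + - star u v by rewrite bmulE addrK.
rewrite e -[X in X - star u x](subrK (star (bmul u v) x)) -addrA; apply: torD.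
  by apply: L1 => //; apply/torN; apply: (hv u).2.
rewrite star_mul -[star u x + _ + _]addrA (addrC (star u x + _)) addKr; apply: torD; first exact: (hv x).1.
by apply: tor_star_r; apply: (hv x).1.
Qed.

Lemma ZT0 (A : brace) : ZT (0 : A).
Proof. by move=> x; rewrite star0l raddf0; split; apply: tor0. Qed.

Lemma ZT_N (A : brace) (hc : star_hypercentral A) (d : A) : ZT d -> ZT (- d).
Proof.
move=> hd x; split; last by rewrite raddfN; apply/torN; apply: (hd x).2.
have := L2 hc (- d) x hd; rewrite addNr star0l sub0r => /torN; by rewrite opprK.
Qed.

Lemma ZT_D (A : brace) (hc : star_hypercentral A) (c d : A) : ZT c -> ZT d -> ZT (c + d).
Proof.
move=> hc' hd x; split; last by rewrite raddfD; apply: torD; [apply: (hc' x).2 | apply: (hd x).2].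
rewrite -[X in torsion X](subrK (star c x)); apply: torD; first exact: L2.
exact: (hc' x).1.
Qed.

Lemma ZT_B (A : brace) (hc : star_hypercentral A) (c d : A) : ZT c -> ZT d -> ZT (c - d).
Proof. by move=> h1 h2; apply: ZT_D => //; apply: ZT_N. Qed.

Lemma ZT_mulrn (A : brace) (hc : star_hypercentral A) (c : A) k : ZT c -> ZT (c *+ k).
Proof.
move=> h; elim: k => [|k IH]; first by rewrite mulr0n; apply: ZT0.
by rewrite mulrSr; apply: ZT_D.
Qed.

Lemma ZT_mulrz (A : brace) (hc : star_hypercentral A) (c : A) k : ZT c -> ZT (c *~ k).
Proof.
move=> h; case: k => k; first by rewrite -pmulrn; apply: ZT_mulrn.
by rewrite NegzE mulrNz -pmulrn; apply/ZT_N/ZT_mulrn.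
Qed.

Lemma ZT_eq (A : brace) (hc : star_hypercentral A) (c y : A) :
  ZT c -> torsion (y - c) -> ZT y.
Proof.
move=> h ht; rewrite -(subrK c y); apply: ZT_D => //; exact: ZT_tor.
Qed.

Definition hyp (A : brace) (a : A) := forall x, ZT (star a x) /\ ZT (star x a).

Lemma L3 (A : brace) (hc : star_hypercentral A) (a u x : A) : hyp a ->
  torsion (star (u + a) x - (star u x + star a x)).
Proof.
move=> ha.
have e : u + a = bmul u a + - star u a by rewrite bmulE addrK.
rewrite e -[X in X - _](subrK (star (bmul u a) x)) -addrA; apply: torD.
  by apply: L2 => //; apply/ZT_N => //; apply: (ha u).2.
rewrite star_mul addrAC subrr add0r; exact: ((ha x).1 u).2.
Qed.

Lemma star_mulrn_l (A : brace) (hc : star_hypercentral A) (a x : A) k : hyp a ->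
  torsion (star (a *+ k) x - star a x *+ k).
Proof.
move=> ha; elim: k => [|k IH]; first by rewrite !mulr0n star0l subrr; apply: tor0.
rewrite !mulrSr.
have -> : star (a *+ k + a) x - (star a x *+ k + star a x) =
  (star (a *+ k + a) x - (star (a *+ k) x + star a x)) +
  (star (a *+ k) x - star a x *+ k).
  set P := star (a *+ k + a) x; set Q := star (a *+ k) x; set r := star a x.
  rewrite [RHS]addrA (addrC Q r) (opprD r Q) (addrA P (- r)) subrK.
  by rewrite (opprD (r *+ k)) addrA addrAC.
by apply: torD => //; apply: L3.
Qed.

Lemma hyp_mulrn (A : brace) (hc : star_hypercentral A) (a : A) k : hyp a -> hyp (a *+ k).
Proof.
move=> ha x; split.
  apply: (ZT_eq hc (c := star a x *+ k)); first by apply: ZT_mulrn => //; apply: (ha x).1.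
  exact: star_mulrn_l.
by rewrite raddfMn; apply: ZT_mulrn => //; apply: (ha x).2.
Qed.

Lemma star_mulrz_l (A : brace) (hc : star_hypercentral A) (a x : A) k : hyp a ->
  torsion (star (a *~ k) x - star a x *~ k).
Proof.
move=> ha; case: k => k; first by rewrite -!pmulrn; apply: star_mulrn_l.
rewrite NegzE !mulrNz -!pmulrn opprK.
set b := a *+ k.+1.
have hb : hyp b by apply: hyp_mulrn.
have := L3 hc (- b) x hb; rewrite addNr star0l sub0r => /torN; rewrite opprK => h1.
have h2 := star_mulrn_l hc x k.+1 ha.
have -> : star (- b) x + star a x *+ k.+1 =
   (star (- b) x + star b x) - (star b x - star a x *+ k.+1).
  by rewrite opprB addrACA subrr addr0.
by apply: torB.
Qed.

Lemma sub3 (A : brace) (x1 x2 x3 y1 y2 y3 : A) :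
  (x1 + x2 + x3) - (y1 + y2 + y3) = (x1 - y1) + (x2 - y2) + (x3 - y3).
Proof. by rewrite opprD addrACA; congr (_ + _); rewrite opprD addrACA. Qed.

Lemma tor3 (A : brace) (X Y Z W : A) :
  torsion (X - W) -> torsion Y -> torsion Z -> torsion (X + Y + Z - W).
Proof.
move=> h1 h2 h3; rewrite addrAC (addrAC X).
by apply: torD => //; apply: torD.
Qed.

Lemma sub_mid (A : brace) (X P S W : A) : X - (P + W) = X - (P + S) + (S - W).
Proof. by rewrite !opprD !addrA subrK. Qed.

Lemma subbraceT (A : brace) : subbrace (fun _ : A => True).
Proof. by []. Qed.

Lemma Key (A : brace) (hc : star_hypercentral A) (hT : T_brace A) (a : A) :
  hyp a -> forall x,
  (exists n m : int, torsion (star x a - (a *~ n + star a a *~ m))) /\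
  (exists n m : int, torsion (star a x - (a *~ n + star a a *~ m))).
Proof.
move=> ha x0; have hw0 : ZT (star a a) := (ha a).1.
move eqw : (star a a) hw0 => w hw.
pose J y := exists n c, ZT c /\ y = a *~ n + c.
pose I y := exists n m t, torsion t /\ y = a *~ n + w *~ m + t.
have Jform : forall n c x, ZT c -> torsion (star (a *~ n + c) x - star a x *~ n).
  move=> n c x hc'.
  rewrite -[X in X - _](subrK (star (a *~ n) x)) -addrA; apply: torD.
    exact: L2.
  exact: star_mulrz_l.
have idJ : ideal J.
  apply: ideal_ofP => //.
  - by exists 0, 0; split; [apply: ZT0 | rewrite mulr0z addr0].
  - move=> _ _ [n [c [hc1 ->]]] [n' [c' [hc2 ->]]]; exists (n - n'), (c - c'); split.
      exact: ZT_B.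
    by rewrite mulrzBr opprD addrACA.
  - move=> j _ _ [n [c [hc' ->]]]; split.
      exists 0, (star j (a *~ n + c)); split; last by rewrite mulr0z add0r.
      rewrite raddfD raddfMz /=; apply: ZT_D => //.
        by apply: ZT_mulrz => //; apply: (ha j).2.
      by apply: ZT_tor => //; apply: (hc' j).2.
    exists 0, (star (a *~ n + c) j); split; last by rewrite mulr0z add0r.
    apply: (ZT_eq hc (c := star a j *~ n)); last exact: Jform.
    by apply: ZT_mulrz => //; apply: (ha j).1.
have subJ : subbrace J by case: idJ.
have idIJ : ideal_of J I.
  apply: ideal_ofP => //.
  - by exists 0, 0, 0; split; [apply: tor0 | rewrite !mulr0z !addr0].
  - move=> _ _ [n [m [t [ht ->]]]] [n' [m' [t' [ht' ->]]]].
    exists (n - n'), (m - m'), (t - t'); split; first exact: torB.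
    by rewrite !mulrzBr sub3.
  - move=> _ [n [m [t [ht ->]]]]; exists n, (w *~ m + t); split; last by rewrite addrA.
    by apply: ZT_D => //; [apply: ZT_mulrz | apply: ZT_tor].
  - move=> _ _ [n' [c [hc' ->]]] [n [m [t [ht ->]]]]; split.
      set S := star _ _.
      have hS : torsion (S - w *~ (n' * n)).
        have -> : S = star (a *~ n' + c) a *~ n + star (a *~ n' + c) w *~ m +
                      star (a *~ n' + c) t by rewrite /S !raddfD /= !raddfMz.
        apply: tor3; last by apply: tor_star_r.
          rewrite mulrzA -mulrzBl; apply: tor_mulrz.
          by rewrite -eqw; apply: Jform.
        by apply: tor_mulrz; apply: (hw _).2.
      exists 0, (n' * n), (S - w *~ (n' * n)); split => //.
      by rewrite mulr0z add0r addrC subrK.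
    set S := star _ _.
    have hS : torsion (S - w *~ (n' * n)).
      have hz : ZT (w *~ m + t) by apply: ZT_D => //; [apply: ZT_mulrz | apply: ZT_tor].
      rewrite -[X in X - _](subrK (star a (a *~ n' + c) *~ n)) -addrA; apply: torD.
        by rewrite /S -(addrA (a *~ n)); apply: Jform.
      rewrite mulrzA -mulrzBl; apply: tor_mulrz.
      by rewrite raddfD raddfMz /= eqw addrC addKr; apply: (hc' a).2.
    exists 0, (n' * n), (S - w *~ (n' * n)); split => //.
    by rewrite mulr0z add0r addrC subrK.
have idI : ideal I by apply: (hT I J).
have Ia : I a by exists 1, 0, 0; split; [apply: tor0 | rewrite mulr1z mulr0z !addr0].
case: idI => _ _ /(_ x0 a Logic.I Ia) [] [n [m [t [ht e1]]]] [n2 [m2 [t2 [ht2 e2]]]].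
split; [exists n, m | exists n2, m2].
  by rewrite e1 addrAC subrr add0r.
by rewrite e2 addrAC subrr add0r.
Qed.

Lemma ZT_pure (A : brace) (hc : star_hypercentral A) (a : A) (k : int) :
  hyp a -> k != 0 -> ZT (a *~ k) -> ZT a.
Proof.
move=> ha k0 hk x; split.
  apply: (tor_purez k0).
  have h := star_mulrz_l hc x k ha.
  have -> : star a x *~ k = star (a *~ k) x - (star (a *~ k) x - star a x *~ k)
    by rewrite opprB addrC subrK.
  by apply: torB => //; apply: (hk x).1.
by apply: (tor_purez k0); rewrite -raddfMz; apply: (hk x).2.
Qed.

Lemma hyp_ZT (A : brace) (hc : star_hypercentral A) (hT : T_brace A) (a : A) :
  hyp a -> ZT a.
Proof.
move=> ha.
have hw : ZT (star a a) := (ha a).1.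
have tw : ZT a \/ torsion (star a a).
  set b := a *+ 2.
  have hb : hyp b by apply: hyp_mulrn.
  have [[n [m h]] _] := Key hc hT hb a.
  have h2 := star_mulrn_l hc b 2 ha.
  have eab : star a b = star a a *+ 2 by rewrite raddfMn.
  set w := star a a in hw eab h2 *.
  have hD : torsion (w *+ 2 - (b *~ n + (w *~ 4) *~ m)).
    rewrite (sub_mid _ _ (star b b *~ m)) -eab -mulrzBl.
    apply: torD => //; apply: tor_mulrz.
    by have -> : w *~ 4 = star a b *+ 2 by rewrite eab -mulrnA.
  have [n0|n0] := eqVneq n 0.
    right; move: hD; rewrite n0 mulr0z add0r.
    have -> : w *+ 2 - w *~ 4 *~ m = w *~ (2 - 4 * m) by rewrite mulrzBr mulrzA.
    apply: tor_purez; apply/eqP => /eqP; lia.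
  left; apply: (@ZT_pure _ hc a (2 * n)) => //.
    by rewrite mulf_eq0 negb_or n0.
  rewrite mulrzA.
  have -> : a *~ 2 = b by [].
  apply: (ZT_eq hc (c := w *+ 2 - (w *~ 4) *~ m)).
    have h1 : ZT (w *+ 2) by apply: ZT_mulrn.
    have h4 : ZT (w *~ 4 *~ m) by apply: ZT_mulrz => //; apply: ZT_mulrz.
    exact: ZT_B.
  have -> : b *~ n - (w *+ 2 - w *~ 4 *~ m) = - (w *+ 2 - (b *~ n + w *~ 4 *~ m))
    by rewrite !opprB addrA.
  exact: torN.
case: tw => // tw x.
have [[n [m h1]] [n2 [m2 h2]]] := Key hc hT ha x.
split.
  have [e|e] := eqVneq n2 0.
    have -> : star a x = (star a x - (a *~ n2 + star a a *~ m2)) + star a a *~ m2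
      by rewrite e mulr0z add0r subrK.
    by apply: torD => //; apply: tor_mulrz.
  apply: ((ZT_pure hc ha e _) x).1.
  apply: (ZT_eq hc (c := star a x)); first exact: (ha x).1.
  have -> : a *~ n2 - star a x = - (star a x - (a *~ n2 + star a a *~ m2)) - star a a *~ m2
    by rewrite opprB addrAC addrK.
  by apply: torB; [apply: torN | apply: tor_mulrz].
have [e|e] := eqVneq n 0.
  have -> : star x a = (star x a - (a *~ n + star a a *~ m)) + star a a *~ m
    by rewrite e mulr0z add0r subrK.
  by apply: torD => //; apply: tor_mulrz.
apply: ((ZT_pure hc ha e _) x).2.
apply: (ZT_eq hc (c := star x a)); first exact: (ha x).2.
have -> : a *~ n - star x a = - (star x a - (a *~ n + star a a *~ m)) - star a a *~ m
  by rewrite opprB addrAC addrK.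
by apply: torB; [apply: torN | apply: tor_mulrz].
Qed.

Theorem corollary3 (A : brace) :
  star_hypercentral A -> T_brace A -> ~ add_periodic A ->
  ideal (torsion (A:=A)) /\ quotient_abelian (torsion (A:=A)).
Proof.
move=> hc hT _.
have all : forall a : A, ZT a.
  move=> a; have [S [hS Sa]] := hc a.
  elim: hS a Sa => [a -> | S0 _ IH a Sa | P _ _ IH a [S1 [PS Sa]]].
  - exact: ZT0.
  - by apply: (hyp_ZT hc hT) => x; split; apply: IH; [apply: (Sa x).1 | apply: (Sa x).2].
  - exact: IH PS a Sa.
split; last by move=> a b; apply: (all a b).1.
apply: ideal_ofP => //.
- exact: tor0.
- by move=> x y; apply: torB.
- by move=> j z _ _; split; [apply: (all j z).1 | apply: (all z j).1].
Qed.
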